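(* Let $\mathbb K$ be an algebraically closed field and $n\ge 1$. For every integer $\mu$ with $0\le\mu\le\lfloor n/2\rfloor$, the closure of $\mathcal P^\mu_n$ in $\mathcal P_n$ (with the topology induced by the Zariski topology of $\mathbb K[t]_n^3\cong\mathbb A^{3n+3}$) equals $\mathcal P^0_n\cup\mathcal P^1_n\cup\dots\cup\mathcal P^\mu_n$. Equivalently, for $\mu<\lfloor n/2\rfloor$, every element of $\mathcal P^\mu_n$ lies in the closure of $\mathcal P^{\mu+1}_n$.
   Context: For a field $F$ and $a,b,c\in F[t]$, $\mathrm{Syz}(a,b,c)=\{(A,B,C)\in F[t]^3: Aa+Bb+Cc=0\}$, $\deg(A,B,C)=\max\{\deg A,\deg B,\deg C\}$, and the class is $\mu(a,b,c)=\min\{\deg(A,B,C): (A,B,C)\in \mathrm{Syz}(a,b,c)\setminus\{0\}\}$. $\mathbb K[t]_n$ denotes polynomials of degree $\le n$; $\mathcal P_n\subset \mathbb K[t]_n^3$ is the set of triples $(a,b,c)$ with $c\neq 0$, $\gcd(a,b,c)=1$ and $\max\{\deg a,\deg b,\deg c\}=n$; $\mathcal P^\mu_n=\{(a,b,c)\in\mathcal P_n:\mu(a,b,c)=\mu\}$. It is known that $\mathcal P_n=\mathcal P^0_n\cup\dots\cup\mathcal P^{\lfloor n/2\rfloor}_n$. *)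

(* Defs.v *)
From HB Require Import structures.
From mathcomp Require Import all_boot all_order all_algebra.
From mathcomp Require Import mpoly.
Set Implicit Arguments. Unset Strict Implicit. Unset Printing Implicit Defensive.
Import Order.TTheory GRing.Theory Num.Theory.
Local Open Scope ring_scope.

Section Defs.
Variable K : closedFieldType.

(* degree of a polynomial (deg 0 taken as 0; harmless inside max over a
   nonzero triple, since a nonzero component has degree >= 0) *)
Definition pdeg (p : {poly K}) : nat := (size p).-1.

Definition tdeg (A B C : {poly K}) : nat := maxn (pdeg A) (maxn (pdeg B) (pdeg C)).

Definition is_syz (a b c A B C : {poly K}) : Prop := A * a + B * b + C * c = 0.

Definition is_class (a b c : {poly K}) (m : nat) : Prop :=
  (exists A B C, is_syz a b c A B C /\ (A, B, C) != (0, 0, 0) /\ tdeg A B C = m) /\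
  (forall A B C, is_syz a b c A B C -> (A, B, C) != (0, 0, 0) -> (m <= tdeg A B C)%N).

Definition inP (n : nat) (a b c : {poly K}) : Prop :=
  c != 0 /\ coprimep (gcdp a b) c /\ maxn (size a) (maxn (size b) (size c)) = n.+1.

Definition inPmu (n mu : nat) (a b c : {poly K}) : Prop := inP n a b c /\ is_class a b c mu.

Definition coords (n : nat) (a b c : {poly K}) : 'I_(3 * n.+1) -> K :=
  fun i => let k := nat_of_ord i in
    if (k < n.+1)%N then a`_k
    else if (k < 2 * n.+1)%N then b`_(k - n.+1)
    else c`_(k - 2 * n.+1).

Arguments coords : clear implicits.

Definition zclosed (N : nat) (Z : ('I_N -> K) -> Prop) : Prop :=
  exists F : {mpoly K[N]} -> Prop, forall x, Z x <-> (forall p, F p -> p.@[x] = 0).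

Definition zclosure (N : nat) (S : ('I_N -> K) -> Prop) (x : 'I_N -> K) : Prop :=
  forall Z, zclosed Z -> (forall y, S y -> Z y) -> Z x.

Definition Pmu_pts (n mu : nat) : ('I_(3 * n.+1) -> K) -> Prop :=
  fun y => exists a b c : {poly K}, inPmu n mu a b c /\ y = coords n a b c.

End Defs.
Arguments coords {K} n a b c _.
Arguments zclosure {K N} S x.
Arguments Pmu_pts {K} n mu _.

(* Main.v *)
Require Import Defs.
From HB Require Import structures.
From mathcomp Require Import all_boot all_order all_algebra.
From mathcomp Require Import mpoly.
From mathcomp Require Import zify ring.
From Stdlib Require Import Classical.
Set Implicit Arguments. Unset Strict Implicit. Unset Printing Implicit Defensive.
Import Order.TTheory GRing.Theory Num.Theory.
Local Open Scope ring_scope.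
Record v3 (R : Type) := V3 { vx : R; vy : R; vz : R }.
Arguments V3 {R}.

Section Vec.
Variable R : comRingType.
Implicit Types U W f P Q V T e : v3 R.
Definition vadd U W := V3 (vx U + vx W) (vy U + vy W) (vz U + vz W).
Definition vsc (k : R) U := V3 (k * vx U) (k * vy U) (k * vz U).
Definition dot U W := vx U * vx W + vy U * vy W + vz U * vz W.
Definition cross U W := V3 (vy U * vz W - vz U * vy W)
                           (vz U * vx W - vx U * vz W)
                           (vx U * vy W - vy U * vx W).
Definition v0 : v3 R := V3 0 0 0.

Lemma v3E U : U = V3 (vx U) (vy U) (vz U). Proof. by case: U. Qed.

Ltac vsolve := repeat match goal with U : v3 _ |- _ => destruct U end;
  rewrite /vadd /vsc /dot /cross /v0 /=; try (congr V3); ring.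

Lemma dot_cross_l P Q : dot P (cross P Q) = 0. Proof. vsolve. Qed.
Lemma dot_cross_r P Q : dot Q (cross P Q) = 0. Proof. vsolve. Qed.
Lemma cross_cross_l P T e :
  cross P (cross T e) = vadd (vsc (dot P e) T) (vsc (- dot P T) e).
Proof. vsolve. Qed.
Lemma cross_cross_r V T e :
  cross (cross V T) e = vadd (vsc (dot V e) T) (vsc (- dot T e) V).
Proof. vsolve. Qed.
Lemma cross4a R0 P Q :
  cross (cross R0 Q) (cross P Q) = vsc (dot R0 (cross P Q)) Q.
Proof. vsolve. Qed.
Lemma cross4b R0 P Q :
  cross (cross P R0) (cross P Q) = vsc (- dot R0 (cross P Q)) P.
Proof. vsolve. Qed.
Lemma cross_self P : cross P P = v0. Proof. vsolve. Qed.
Lemma dot_sym U W : dot U W = dot W U. Proof. vsolve. Qed.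
Lemma deform_id p u q' k k' g :
  cross (vadd p (vsc k u)) (vadd (vsc (k' * g) p) q') =
  vadd (vadd (vsc (k' * g) (cross p p)) (cross p q'))
       (vadd (vsc (k * k' * g) (cross u p)) (vsc k (cross u q'))).
Proof. vsolve. Qed.
End Vec.
Section Vec2.
Variable R : comRingType.
Implicit Types U W f P Q V T e : v3 R.
Ltac vsolve := repeat match goal with U : v3 _ |- _ => destruct U end;
  rewrite /vadd /vsc /dot /cross /v0 /=; try (congr V3); ring.
Lemma lagr (f P Q : v3 R) : vsc (dot f Q) P = vadd (vsc (dot f P) Q) (cross f (cross P Q)).
Proof. vsolve. Qed.
Lemma sq_cross (f P Q R0 : v3 R) : vsc (dot f R0 ^+ 2) (cross P Q) = cross (vsc (dot f R0) P) (vsc (dot f R0) Q).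
Proof. vsolve. Qed.
Lemma cross_sc a b U : cross (vsc a U) (vsc b U) = v0 R.
Proof. vsolve. Qed.
Lemma cross_v0r U : cross U (v0 R) = v0 R. Proof. vsolve. Qed.
Lemma cross_v0l U : cross (v0 R) U = v0 R. Proof. vsolve. Qed.
Lemma vadd_v0r U : vadd U (v0 R) = U. Proof. vsolve. Qed.
Lemma vsc_v0 k : vsc k (v0 R) = v0 R. Proof. vsolve. Qed.
Lemma vsc1 U : vsc 1 U = U. Proof. vsolve. Qed.
Lemma vscA a b U : vsc a (vsc b U) = vsc (a * b) U. Proof. vsolve. Qed.
Lemma cross_scl a U W : cross (vsc a U) W = vsc a (cross U W). Proof. vsolve. Qed.
Lemma cross_scr a U W : cross U (vsc a W) = vsc a (cross U W). Proof. vsolve. Qed.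
Lemma dot_scl a U W : dot (vsc a U) W = a * dot U W. Proof. vsolve. Qed.
Lemma dot_v0l U : dot (v0 R) U = 0. Proof. vsolve. Qed.
Lemma cross_addl U U' W : cross (vadd U U') W = vadd (cross U W) (cross U' W). Proof. vsolve. Qed.
Lemma cross_addr U W W' : cross U (vadd W W') = vadd (cross U W) (cross U W'). Proof. vsolve. Qed.
Lemma dot_addl U U' W : dot (vadd U U') W = dot U W + dot U' W. Proof. vsolve. Qed.
Lemma dot_addr U W W' : dot U (vadd W W') = dot U W + dot U W'. Proof. vsolve. Qed.
Lemma cross_anti U W : cross U W = vsc (-1) (cross W U). Proof. vsolve. Qed.

Lemma par_mult V T e : cross V T = v0 R -> dot T e = 1 -> V = vsc (dot V e) T.
Proof.
move=> h1 h2; have := cross_cross_r V T e.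
rewrite h1 h2 cross_v0l => h; rewrite -[LHS]vadd_v0r h.
destruct V; destruct T; rewrite /vadd /vsc /v0 /=; congr V3; ring.
Qed.
End Vec2.

Section VecD.
Variable R : idomainType.
Implicit Types U W f P Q V T e : v3 R.
Definition e1 : v3 R := V3 1 0 0.
Definition e2 : v3 R := V3 0 1 0.
Definition e3 : v3 R := V3 0 0 1.
Lemma dot_e1 U : dot e1 U = vx U. Proof. rewrite /dot /=; ring. Qed.
Lemma dot_e2 U : dot e2 U = vy U. Proof. rewrite /dot /=; ring. Qed.
Lemma dot_e3 U : dot e3 U = vz U. Proof. rewrite /dot /=; ring. Qed.

Lemma nz_dot U : U <> v0 R -> exists f, dot f U != 0.
Proof.
case: U => x y z h.
have [x0|] := eqVneq x 0; last by exists e1; rewrite dot_e1.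
have [y0|] := eqVneq y 0; last by exists e2; rewrite dot_e2.
have [z0|] := eqVneq z 0; last by exists e3; rewrite dot_e3.
by exfalso; apply: h; rewrite x0 y0 z0.
Qed.

Lemma vsc_eq0 k U : k != 0 -> vsc k U = v0 R -> U = v0 R.
Proof.
case: U => x y z kn0 [] /eqP; rewrite mulf_eq0 (negbTE kn0) /= => /eqP ->.
by move/eqP; rewrite mulf_eq0 (negbTE kn0) /= => /eqP -> /eqP; rewrite mulf_eq0 (negbTE kn0) /= => /eqP ->.
Qed.

Lemma three_par (P Q R0 : v3 R) : R0 <> v0 R -> cross P R0 = v0 R -> cross R0 Q = v0 R ->
  cross P Q = v0 R.
Proof.
move=> /nz_dot [f hf] h1 h2.
apply: (@vsc_eq0 (dot f R0 ^+ 2)); first by rewrite expf_neq0.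
rewrite sq_cross lagr h1 cross_v0r vadd_v0r.
rewrite (lagr f Q R0).
have -> : cross Q R0 = v0 R by rewrite cross_anti h2 vsc_v0.
by rewrite cross_v0r vadd_v0r cross_sc.
Qed.
End VecD.

Section VecF.
Variable F : fieldType.
Lemma par_const (x y : v3 F) : x <> v0 F -> cross y x = v0 F -> exists l, y = vsc l x.
Proof.
move=> /nz_dot [f hf] h.
exists (dot f y / dot f x).
have := lagr f y x; rewrite h cross_v0r vadd_v0r => e.
transitivity (vsc (dot f x)^-1 (vsc (dot f x) y)); first by rewrite vscA mulVf // vsc1.
by rewrite e vscA mulrC.
Qed.
End VecF.
Section PV.
Variable K : closedFieldType.
Local Notation PV := (v3 {poly K}).
Implicit Types U W P Q T : PV.

Definition tsz U := maxn (size (vx U)) (maxn (size (vy U)) (size (vz U))).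
Definition vcoef U i : v3 K := V3 (vx U)`_i (vy U)`_i (vz U)`_i.

Lemma tsz_leP U N : (tsz U <= N)%N <->
  [/\ (size (vx U) <= N)%N, (size (vy U) <= N)%N & (size (vz U) <= N)%N].
Proof. by rewrite /tsz !geq_max; split => [/and3P [] | [-> -> ->]]. Qed.

Lemma size_add_le (p q : {poly K}) N : (size p <= N)%N -> (size q <= N)%N -> (size (p + q)%R <= N)%N.
Proof. by move=> hp hq; apply: leq_trans (size_polyD _ _) _; rewrite geq_max hp hq. Qed.
Lemma size_sub_le (p q : {poly K}) N : (size p <= N)%N -> (size q <= N)%N -> (size (p - q)%R <= N)%N.
Proof. by move=> hp hq; apply: size_add_le; rewrite ?size_opp. Qed.
Lemma size_mul_le (p q : {poly K}) a b : (size p <= a)%N -> (size q <= b)%N ->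
  (size (p * q)%R <= (a + b).-1)%N.
Proof.
move=> hp hq; apply: leq_trans (size_mul_leq _ _) _.
have : (size p + size q <= a + b)%N by apply: leq_add.
by case: (size p + size q)%N => //= k; case: (a + b)%N.
Qed.

Lemma tsz_cross U W : (tsz (cross U W) <= (tsz U + tsz W).-1)%N.
Proof.
have /tsz_leP [h1 h2 h3] := leqnn (tsz U).
have /tsz_leP [k1 k2 k3] := leqnn (tsz W).
by apply/tsz_leP; split; rewrite /cross /=; apply: size_sub_le; apply: size_mul_le.
Qed.

Lemma size_dot U W : (size (dot U W) <= (tsz U + tsz W).-1)%N.
Proof.
have /tsz_leP [h1 h2 h3] := leqnn (tsz U).
have /tsz_leP [k1 k2 k3] := leqnn (tsz W).
by rewrite /dot; apply: size_add_le; [apply: size_add_le|]; apply: size_mul_le.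
Qed.

Lemma tsz_add U W N : (tsz U <= N)%N -> (tsz W <= N)%N -> (tsz (vadd U W) <= N)%N.
Proof.
move=> /tsz_leP [h1 h2 h3] /tsz_leP [k1 k2 k3].
by apply/tsz_leP; split; rewrite /vadd /=; apply: size_add_le.
Qed.

Lemma tsz_vsc_le k U : (tsz (vsc k U) <= (size k + tsz U).-1)%N.
Proof.
have /tsz_leP [h1 h2 h3] := leqnn (tsz U).
by apply/tsz_leP; split; rewrite /vsc /=; apply: size_mul_le.
Qed.

Lemma size_mul_ge (k p : {poly K}) : k != 0 -> (size p <= size (k * p)%R)%N.
Proof.
move=> kn0; have [->|pn0] := eqVneq p 0; first by rewrite mulr0.
rewrite size_mul //; have : (0 < size k)%N by rewrite size_poly_gt0.
by case: (size k) => // s _; rewrite addSn /=  leq_addl.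
Qed.

Lemma tsz_vsc_ge k U : k != 0 -> (tsz U <= tsz (vsc k U))%N.
Proof.
move=> kn0; apply/tsz_leP; rewrite /tsz /vsc /=.
split; rewrite !leq_max ?size_mul_ge //= ?orbT //.
Qed.

Lemma tsz_coefP U N : (forall j, (N <= j)%N -> vcoef U j = v0 K) -> (tsz U <= N)%N.
Proof.
move=> h; apply/tsz_leP; split; apply/leq_sizeP => j /h; rewrite /vcoef /v0; by case.
Qed.

Lemma vcoef_big U j : (tsz U <= j)%N -> vcoef U j = v0 K.
Proof.
move=> /tsz_leP [h1 h2 h3]; rewrite /vcoef /v0.
by rewrite !nth_default.
Qed.

Lemma tsz_eq0 U : tsz U = 0%N -> U = v0 {poly K}.
Proof.
move=> h; have /tsz_leP [] : (tsz U <= 0)%N by rewrite h.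
rewrite !leqn0 !size_poly_eq0 => /eqP h1 /eqP h2 /eqP h3.
by rewrite (v3E U) h1 h2 h3.
Qed.

Lemma tsz_v0 : tsz (v0 {poly K}) = 0%N.
Proof. by rewrite /tsz /v0 /= size_poly0. Qed.

Lemma vcoef_top U a : tsz U = a.+1 -> vcoef U a <> v0 K.
Proof.
rewrite /tsz /vcoef /v0 => h [] e1 e2 e3.
have : (tsz U <= a)%N.
  apply/tsz_leP; split; apply/leq_sizeP => j; rewrite leq_eqVlt => /orP [/eqP <-|hj] //;
  apply: nth_default; apply: leq_trans hj; rewrite -h /tsz ?leq_maxl //.
  - by apply: leq_trans (leq_maxr _ _); rewrite leq_maxl.
  - by apply: leq_trans (leq_maxr _ _); rewrite leq_maxr.
by rewrite /tsz h ltnn.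
Qed.

Lemma coef_mul_top (p q : {poly K}) a b : (size p <= a.+1)%N -> (size q <= b.+1)%N ->
  (p * q)`_(a + b) = p`_a * q`_b.
Proof.
move=> hp hq; rewrite coefM.
have ha : (a < (a + b).+1)%N by rewrite ltnS leq_addr.
rewrite (bigD1 (Ordinal ha)) //= addKn big1 ?addr0 // => j /eqP hj.
have [lt|gt] := ltnP j a.
  rewrite [q`__]nth_default ?mulr0 //; apply: leq_trans hq _.
  have : (j < a)%N by []. lia.
rewrite [p`__]nth_default ?mul0r //; apply: leq_trans hp _.
have : j != Ordinal ha :> nat by apply/eqP => h; apply: hj; apply: val_inj.
simpl; lia.
Qed.

Lemma vcoef_cross U W a b : (tsz U <= a.+1)%N -> (tsz W <= b.+1)%N ->
  vcoef (cross U W) (a + b) = cross (vcoef U a) (vcoef W b).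
Proof.
move=> /tsz_leP [h1 h2 h3] /tsz_leP [k1 k2 k3].
by rewrite /vcoef /cross /= !coefB !coef_mul_top.
Qed.

Lemma vcoef_add U W j : vcoef (vadd U W) j = vadd (vcoef U j) (vcoef W j).
Proof. by rewrite /vcoef /vadd /= !coefD. Qed.

End PV.
Lemma ex_min (P : nat -> Prop) : (exists k, P k) -> exists k, P k /\ forall j, P j -> (k <= j)%N.
Proof.
move=> [k hk]; elim/ltn_ind: k hk => k IH hk.
case: (classic (exists j, P j /\ (j < k)%N)) => [[j [hj jk]]|hno]; first exact: IH j jk hj.
exists k; split => // j hj; rewrite leqNgt; apply/negP => jk; apply: hno; exists j; by split.
Qed.

Ltac slia := repeat match goal with |- context [size ?p] => let a := fresh "sz" in move: (size p) => a end; lia.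

Section Syz.
Variable K : closedFieldType.
Local Notation PV := (v3 {poly K}).
Implicit Types U W P Q T p q : PV.

Lemma bezout3 (x y z : {poly K}) : coprimep (gcdp x y) z -> exists e : PV, dot e (V3 x y z) = 1.
Proof.
case/Bezout_eq1_coprimepP => [[u1 u2]] /= h.
case: (Bezoutp x y) => [[w1 w2]] /= /eqpP [[c1 c2]] /andP [/= c1n0 c2n0] hc.
have hg : gcdp x y = (c2^-1 * c1)%:P * (w1 * x + w2 * y).
  by rewrite polyCM -mulrA !mul_polyC hc scalerA mulVf // scale1r.
exists (V3 (u1 * (c2^-1*c1)%:P * w1) (u1 * (c2^-1 * c1)%:P * w2) u2).
by rewrite -h hg /dot /=; ring.
Qed.

Lemma vsc0 U : vsc 0 U = v0 {poly K}.
Proof. by case: U => x y z; rewrite /vsc /v0 /= !mul0r. Qed.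

Lemma tsz_vsc_lt (g : {poly K}) U : (1 < size g)%N -> U <> v0 _ -> (tsz U < tsz (vsc g U))%N.
Proof.
move=> hg hU.
have key : forall x : {poly K}, x != 0 -> (size x < size (g * x)%R)%N.
  move=> x xn0; have gn0 : g != 0 by rewrite -size_poly_gt0 (ltn_trans _ hg).
  have hx : (0 < size x)%N by rewrite size_poly_gt0.
  rewrite size_mul //; move: hg; case: (size g) => [|[|k]] //= _.
  by rewrite !addSn /= ltnS leq_addl.
have comp : forall x : {poly K}, (size x < size (g * x)%R)%N \/ (size x = 0%N /\ size (g * x)%R = 0%N).
  move=> x; have [->|xn0] := eqVneq x 0; last by left; apply: key.
  by right; rewrite mulr0 size_poly0.
have nz : (0 < size (vx U))%N \/ (0 < size (vy U))%N \/ (0 < size (vz U))%N.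
  case: U hU => x y z hU /=; rewrite !size_poly_gt0.
  have [x0|] := eqVneq x 0; last by left.
  have [y0|] := eqVneq y 0; last by right; left.
  have [z0|] := eqVneq z 0; last by right; right.
  by exfalso; apply: hU; rewrite x0 y0 z0.
rewrite /tsz /vsc /=.
have := comp (vx U); have := comp (vy U); have := comp (vz U); move: nz; slia.
Qed.

Lemma minsyz_unimod p T : dot p T = 0 -> p <> v0 _ ->
  (forall R0, dot R0 T = 0 -> R0 <> v0 _ -> (tsz p <= tsz R0)%N) ->
  exists e, dot e p = 1.
Proof.
move=> hs hp hmin.
set g := gcdp (gcdp (vx p) (vy p)) (vz p).
have [hg|hg] := eqVneq (size g) 1%N.
  have : coprimep (gcdp (vx p) (vy p)) (vz p) by rewrite coprimep_def hg.
  by move/bezout3; rewrite -v3E.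
exfalso.
have gdx : g %| vx p := dvdp_trans (dvdp_gcdl _ _) (dvdp_gcdl _ _).
have gdy : g %| vy p := dvdp_trans (dvdp_gcdl _ _) (dvdp_gcdr _ _).
have gdz : g %| vz p := dvdp_gcdr _ _.
have gn0 : g != 0.
  apply/negP; rewrite /g gcdp_eq0 gcdp_eq0 => /andP [/andP [/eqP h1 /eqP h2] /eqP h3].
  by apply: hp; rewrite (v3E p) h1 h2 h3.
set p' := V3 (vx p %/ g) (vy p %/ g) (vz p %/ g).
have ep : p = vsc g p'.
  by rewrite (v3E p) /vsc /p' /=; congr V3; rewrite mulrC divpK.
have hp' : p' <> v0 _ by move=> h; apply: hp; rewrite ep h vsc_v0.
have hs' : dot p' T = 0.
  by move: hs; rewrite ep dot_scl => /eqP; rewrite mulf_eq0 (negbTE gn0) => /eqP.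
have g1 : (1 < size g)%N by move: hg; rewrite -size_poly_gt0 in gn0; move: gn0; slia.
have := tsz_vsc_lt g1 hp'; rewrite -ep.
by have := hmin p' hs' hp'; lia.
Qed.

Lemma syz_lower P Q R0 e : dot (cross P Q) e = 1 -> dot R0 (cross P Q) = 0 -> R0 <> v0 _ ->
  (tsz R0 + tsz Q <= tsz (cross P Q))%N -> (tsz P + tsz R0 <= tsz (cross P Q))%N -> False.
Proof.
set T := cross P Q => he hs hR h1 h2.
have Tn0 : (0 < tsz T)%N.
  rewrite lt0n; apply/eqP => /tsz_eq0 h; move: he; rewrite h dot_v0l => /eqP.
  by rewrite eq_sym oner_eq0.
have c1 : cross R0 Q = v0 _.
  have := cross4a R0 P Q; rewrite -/T hs vsc0 => /par_mult /(_ he) h.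
  have [a0|an0] := eqVneq (dot (cross R0 Q) e) 0; first by rewrite h a0 vsc0.
  have := tsz_vsc_ge T an0; rewrite -h; have := tsz_cross R0 Q; lia.
have c2 : cross P R0 = v0 _.
  have := cross4b R0 P Q; rewrite -/T hs oppr0 vsc0 => /par_mult /(_ he) h.
  have [a0|an0] := eqVneq (dot (cross P R0) e) 0; first by rewrite h a0 vsc0.
  have := tsz_vsc_ge T an0; rewrite -h; have := tsz_cross P R0; lia.
have := three_par hR c2 c1; rewrite -/T => h.
by move: Tn0; rewrite h tsz_v0.
Qed.

End Syz.
Lemma vadd_opp (R : comRingType) (a : R) (U : v3 R) : vadd (vsc a U) (vsc (- a) U) = v0 R.
Proof. case: U => x y z; rewrite /vadd /vsc /v0 /=; congr V3; ring. Qed.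

Section Exq.
Variable K : closedFieldType.
Local Notation PV := (v3 {poly K}).
Implicit Types U W P Q T p q : PV.

Lemma vcoef_scC (c : K) U j : vcoef (vsc c%:P U) j = vsc c (vcoef U j).
Proof. by rewrite /vcoef /vsc /= !coefCM. Qed.

Lemma vcoef_scXn k U j : vcoef (vsc 'X^k U) j = if (j < k)%N then v0 K else vcoef U (j - k).
Proof. by rewrite /vcoef /vsc /= !coefXnM; case: ifP. Qed.

Lemma exists_q p T e m n : dot p T = 0 -> dot e p = 1 -> tsz p = m.+1 -> tsz T = n.+1 ->
  (m <= n - m)%N -> exists q, cross p q = T /\ tsz q = (n - m).+1.
Proof.
move=> hs he hp hT hmn.
have hq0 : cross p (cross T e) = T.
  by rewrite cross_cross_l dot_sym he hs oppr0 vsc0 vadd_v0r vsc1.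
have [d [[q [hqT hqs]] qmin]] := ex_min (ex_intro (fun k => exists q, cross p q = T /\ tsz q = k) _
   (ex_intro _ (cross T e) (conj hq0 erefl))).
exists q; split => //.
have qn0 : q <> v0 _.
  move=> h; move: hT; rewrite -hqT h cross_v0r tsz_v0 //.
case: d hqs qmin => [/tsz_eq0 //|d'] hqs qmin.
have hlow : (n <= m + d')%N.
  have := tsz_cross p q; rewrite hqT hT hp hqs; rewrite addSn addnS /=; lia.
suff : (d' <= n - m)%N by move=> h; rewrite hqs; lia.
rewrite leqNgt; apply/negP => hlt.
have hmd : (m <= d')%N by lia.
have hc : cross (vcoef p m) (vcoef q d') = v0 K.
  rewrite -vcoef_cross ?hp ?hqs // hqT vcoef_big // hT; lia.
have hpm := vcoef_top hp.
have [l hl] : exists l, vcoef q d' = vsc l (vcoef p m).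
  apply: par_const => //; by rewrite cross_anti hc vsc_v0.
set q' := vadd q (vsc (- l)%:P (vsc 'X^(d' - m) p)).
have hq'T : cross p q' = T.
  by rewrite /q' cross_addr !cross_scr cross_self !vsc_v0 vadd_v0r.
have hq'sz : (tsz q' <= d')%N.
  apply: tsz_coefP => j hj.
  rewrite vcoef_add vcoef_scC vcoef_scXn.
  have -> : (j < d' - m)%N = false by apply/negbTE; rewrite -leqNgt; lia.
  move: hj; rewrite leq_eqVlt => /orP [/eqP <-|hj].
    by rewrite subKn // hl vadd_opp.
  rewrite !vcoef_big ?vsc_v0 ?vadd_v0r // ?hqs ?hp //; lia.
have := qmin _ (ex_intro _ q' (conj hq'T erefl)); lia.
Qed.
End Exq.
Lemma dot_scr (R : comRingType) (k : R) (U W : v3 R) : dot U (vsc k W) = k * dot U W.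
Proof. case: U; case: W => *; rewrite /dot /vsc /=; ring. Qed.
Lemma vadd_oppr (R : comRingType) (U : v3 R) : vadd U (vsc (-1) U) = v0 R.
Proof. case: U => *; rewrite /vadd /vsc /v0 /=; congr V3; ring. Qed.
Lemma cross_T_W (R : comRingType) (p q u : v3 R) (g : R) :
  cross (cross p q) (cross u (vadd q (vsc g u))) = vsc (- dot (cross p q) u) q.
Proof. case: p; case: q; case: u => *; rewrite /cross /vadd /vsc /dot /=; congr V3; ring. Qed.
Lemma deform_full (R : comRingType) (p u q : v3 R) (k k' g : R) : k * k' = 1 ->
  cross (vadd p (vsc k u)) (vadd (vsc (k' * g) p) (vadd q (vsc g u))) =
  vadd (cross p q) (vsc k (cross u (vadd q (vsc g u)))).
Proof.
move=> hk; rewrite deform_id hk mul1r.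
case: p; case: q; case: u => *; rewrite /cross /vadd /vsc /dot /=; congr V3; ring.
Qed.

Lemma scal_nz (F : fieldType) (x y s : F) : x != 0 -> s != - x / y -> x + s * y != 0.
Proof.
move=> xn0 hs; apply/negP => /eqP h.
have [y0|yn0] := eqVneq y 0; first by move: h; rewrite y0 mulr0 addr0 => /eqP; rewrite (negbTE xn0).
apply: (negP hs); apply/eqP.
have -> : x = - (s * y) by apply/eqP; rewrite -subr_eq0 opprK h.
field; exact: yn0.
Qed.

Lemma lin_nz (F : fieldType) (x y : v3 F) (s : F) : x <> v0 F ->
  s \notin [:: - vx x / vx y; - vy x / vy y; - vz x / vz y] -> vadd x (vsc s y) <> v0 F.
Proof.
case: x => x1 x2 x3; case: y => y1 y2 y3 /= hx; rewrite !inE !negb_or => /and3P [h1 h2 h3].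
rewrite /vadd /vsc /v0 /= => [[]] /eqP e1 /eqP e2 /eqP e3.
have [x10|] := eqVneq x1 0; last by move=> /scal_nz /(_ h1); rewrite e1.
have [x20|] := eqVneq x2 0; last by move=> /scal_nz /(_ h2); rewrite e2.
have [x30|] := eqVneq x3 0; last by move=> /scal_nz /(_ h3); rewrite e3.
by apply: hx; rewrite x10 x20 x30.
Qed.

Section PV2.
Variable K : closedFieldType.
Local Notation PV := (v3 {poly K}).
Implicit Types U W P Q T p q : PV.

Definition vCst (c : v3 K) : PV := V3 (vx c)%:P (vy c)%:P (vz c)%:P.
Definition vev U (r : K) : v3 K := V3 (vx U).[r] (vy U).[r] (vz U).[r].

Lemma vev_cross U W r : vev (cross U W) r = cross (vev U r) (vev W r).
Proof. by rewrite /vev /cross /= !hornerE. Qed.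
Lemma vev_dot U W r : (dot U W).[r] = dot (vev U r) (vev W r).
Proof. by rewrite /vev /dot /= !hornerE. Qed.
Lemma vev_add U W r : vev (vadd U W) r = vadd (vev U r) (vev W r).
Proof. by rewrite /vev /vadd /= !hornerE. Qed.
Lemma vev_sc k U r : vev (vsc k U) r = vsc k.[r] (vev U r).
Proof. by rewrite /vev /vsc /= !hornerE. Qed.

Lemma tsz_vCst c : (tsz (vCst c) <= 1)%N.
Proof. by apply/tsz_leP; split; apply: size_polyC_leq1. Qed.
Lemma vcoef_vCst c j : vcoef (vCst c) j = if j == 0%N then c else v0 K.
Proof. by rewrite /vcoef /vCst /= !coefC; case: eqP => //; case: c. Qed.

Lemma nz_dot_small U : U <> v0 _ -> exists f : PV, (tsz f <= 1)%N /\ dot f U != 0.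
Proof.
case: U => x y z h.
have t1 : forall a b c : {poly K}, (size a <= 1)%N -> (size b <= 1)%N -> (size c <= 1)%N ->
  (tsz (V3 a b c) <= 1)%N by move=> a b c ha hb hc; apply/tsz_leP.
have [x0|] := eqVneq x 0; last by exists (e1 _); rewrite dot_e1; split => //; apply: t1; rewrite ?size_poly1 ?size_poly0.
have [y0|] := eqVneq y 0; last by exists (e2 _); rewrite dot_e2; split => //; apply: t1; rewrite ?size_poly1 ?size_poly0.
have [z0|] := eqVneq z 0; last by exists (e3 _); rewrite dot_e3; split => //; apply: t1; rewrite ?size_poly1 ?size_poly0.
by exfalso; apply: h; rewrite x0 y0 z0.
Qed.

Lemma roots_list (P : {poly K}) : P != 0 -> exists rs : seq K, forall r, root P r -> r \in rs.
Proof.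
move: {2}(size P) (leqnn (size P)) => N; elim: N P => [|N IH] P hs hP.
  by move: hP; rewrite -size_poly_eq0; move: hs; rewrite leqn0 => ->.
case: (classic (exists r, root P r)) => [[r0 hr0]|hno]; last first.
  by exists [::] => r hr; exfalso; apply: hno; exists r.
case/factor_theorem: hr0 => Q hPQ.
have Qn0 : Q != 0 by apply: contra hP; move/eqP => h; rewrite hPQ h mul0r.
have hQ : (size Q <= N)%N.
  move: hs; rewrite hPQ size_mul // ?size_XsubC ?polyXsubC_eq0 //.
  by rewrite addn2 /=.
have [rs hrs] := IH Q hQ Qn0.
exists (r0 :: rs) => r; rewrite hPQ rootM root_XsubC inE => /orP [/hrs ->|->]; by rewrite ?orbT.
Qed.

Lemma nocommon_coprime (x y z : {poly K}) :
  (forall r, root x r -> root y r -> root z r -> False) -> coprimep (gcdp x y) z.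
Proof.
move=> h; rewrite coprimep_def; apply/negPn/negP => /closed_rootP [r hr].
apply: (h r).
- exact: root_dvdp (dvdp_trans (dvdp_gcdl _ _) (dvdp_gcdl _ _)) hr.
- exact: root_dvdp (dvdp_trans (dvdp_gcdl _ _) (dvdp_gcdr _ _)) hr.
- exact: root_dvdp (dvdp_gcdr _ _) hr.
Qed.

Lemma pair_nz (A B C : {poly K}) : (A, B, C) != (0, 0, 0) <-> V3 A B C <> v0 _.
Proof.
split.
  by move=> /negP h [] hA hB hC; apply: h; rewrite hA hB hC.
move=> h; apply/negP => /eqP [] hA hB hC; apply: h; by rewrite hA hB hC.
Qed.

Lemma tdeg_tsz (A B C : {poly K}) : tdeg A B C = (tsz (V3 A B C)).-1.
Proof. rewrite /tdeg /pdeg /tsz /=; move: (size A) (size B) (size C) => a b c; lia. Qed.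

Lemma class_to a b c m : is_class a b c m ->
  exists p, [/\ dot p (V3 a b c) = 0, p <> v0 _, tsz p = m.+1 &
    forall R0, dot R0 (V3 a b c) = 0 -> R0 <> v0 _ -> (m.+1 <= tsz R0)%N].
Proof.
case=> [[A [B [C [hs [hn hd]]]]] hmin].
have hp : V3 A B C <> v0 _ by apply/pair_nz.
have pos : forall R0 : PV, R0 <> v0 _ -> (0 < tsz R0)%N.
  by move=> R0 hR; rewrite lt0n; apply/eqP => /tsz_eq0.
exists (V3 A B C); split => //.
  by move: hd; rewrite tdeg_tsz; have := pos _ hp; lia.
move=> R0 hs0 hR0; have := hmin (vx R0) (vy R0) (vz R0).
rewrite tdeg_tsz -v3E /is_syz; have := pos _ hR0.
move=> h1; have e : (vx R0 * a + vy R0 * b + vz R0 * c) = 0 by rewrite -hs0 (v3E R0).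
move=> /(_ e); rewrite pair_nz -v3E => /(_ hR0); lia.
Qed.

Lemma class_of a b c m p : dot p (V3 a b c) = 0 -> p <> v0 _ -> tsz p = m.+1 ->
    (forall R0, dot R0 (V3 a b c) = 0 -> R0 <> v0 _ -> (m.+1 <= tsz R0)%N) ->
  is_class a b c m.
Proof.
move=> hs hp hsz hmin; split.
  exists (vx p), (vy p), (vz p); rewrite /is_syz pair_nz tdeg_tsz -v3E hsz; by split.
move=> A B C hs' hn; rewrite tdeg_tsz; have := hmin (V3 A B C) hs'.
by move=> /(_ (proj1 (pair_nz A B C) hn)); lia.
Qed.

End PV2.
Lemma dot_v0r (R : comRingType) (U : v3 R) : dot U (v0 R) = 0.
Proof. case: U => *; rewrite /dot /v0 /=; ring. Qed.
Lemma vadd_v0l (R : comRingType) (U : v3 R) : vadd (v0 R) U = U.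
Proof. case: U => *; rewrite /vadd /v0 /=; congr V3; ring. Qed.
Lemma lin_solve (R : comRingType) (x y : v3 R) s : vadd x (vsc s y) = v0 R -> x = vsc (- s) y.
Proof.
case: x => x1 x2 x3; case: y => y1 y2 y3; rewrite /vadd /vsc /v0 /= => [[]] e1 e2 e3.
congr V3.
- by rewrite (_ : x1 = (x1 + s * y1) - s * y1); [rewrite e1; ring | ring].
- by rewrite (_ : x2 = (x2 + s * y2) - s * y2); [rewrite e2; ring | ring].
- by rewrite (_ : x3 = (x3 + s * y3) - s * y3); [rewrite e3; ring | ring].
Qed.
Lemma pred_add_le a b c : (a <= 1)%N -> (b <= c)%N -> ((a + b).-1 <= c)%N.
Proof. lia. Qed.

Lemma ar1 n m z : (2 * m + 2 <= n)%N -> (z <= (1 + (n - m - m.+1).+1).-1)%N -> ((z + m.+1).-1 <= n - m)%N.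
Proof. lia. Qed.
Lemma ar2 a b n m : (2 * m + 2 <= n)%N -> (a < m.+2)%N -> (b <= n - m)%N -> (a + b <= n.+1)%N.
Proof. lia. Qed.
Lemma ar3 a n m : (2 * m + 2 <= n)%N -> (a < m.+2)%N -> (m.+2 + a <= n.+1)%N.
Proof. lia. Qed.

Section Deform.
Variable K : closedFieldType.
Local Notation PV := (v3 {poly K}).

Lemma deform n m (a b c : {poly K}) : (2 * m + 2 <= n)%N -> inPmu n m a b c ->
  exists (W : PV) (L : seq K), forall s, s \notin L ->
    inPmu n m.+1 (a + s%:P * vx W) (b + s%:P * vy W) (c + s%:P * vz W).
Proof.
move=> hn [[cn0 [hcop hsz]] hcl].
set T : PV := V3 a b c.
have hT : tsz T = n.+1 by [].
have [p [hps hpn hpsz hpmin]] := class_to hcl.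
have [ep hep] : exists e, dot e p = 1.
  apply: (minsyz_unimod hps hpn) => R0 h1 h2; rewrite hpsz; exact: hpmin.
have [eT heT] := bezout3 hcop.
have hmm : (m <= n - m)%N by lia.
have [q [hpq hqsz]] := exists_q hps hep hpsz hT hmm.
set lq := vcoef q (n - m).
have hlq : lq <> v0 K := vcoef_top hqsz.
set cq := vCst lq.
have Tn0 : T <> v0 _ by move=> h; move: hT; rewrite h tsz_v0.
have qn0 : q <> v0 _.
  by move=> h; move: hpq; rewrite h cross_v0r => h'; apply: Tn0; rewrite /T -h'.
set X1 := vsc (-1)%:P (vsc 'X^(m.+1) cq).
have hX1 : dot T X1 = (-1)%:P * ('X^(m.+1) * dot T cq) by rewrite /X1 !dot_scr.
have [v [hvsz hTu]] : exists v : PV, (tsz v <= 1)%N /\ dot T (vadd X1 v) != 0.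
  have [h0|hn0] := eqVneq (dot T cq) 0.
    have [f [hf1 hf2]] := nz_dot_small Tn0.
    by exists f; split => //; rewrite dot_addr hX1 h0 !mulr0 add0r dot_sym.
  exists (v0 _); split; first by rewrite tsz_v0.
  rewrite dot_addr dot_v0r addr0 hX1 mulf_neq0 //.
    by rewrite polyC_eq0 oppr_eq0 oner_eq0.
  by rewrite mulf_neq0 // monic_neq0 // monicXn.
set u := vadd X1 v.
have hu_coef : vcoef u m.+1 = vsc (-1) lq.
  rewrite vcoef_add /X1 vcoef_scC vcoef_scXn ltnn subnn vcoef_vCst eqxx.
  by rewrite vcoef_big ?vadd_v0r //; apply: leq_trans hvsz _.
have hu_sz : (tsz u <= m.+2)%N.
  apply: tsz_coefP => j hj; rewrite vcoef_add vcoef_scC vcoef_scXn.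
  have -> : (j < m.+1)%N = false by apply/negbTE; rewrite -leqNgt; lia.
  rewrite vcoef_vCst; have -> : (j - m.+1 == 0)%N = false by apply/negbTE; lia.
  rewrite vsc_v0 vcoef_big ?vadd_v0r //; apply: leq_trans hvsz _; lia.
set D := (n - m - m.+1)%N.
set g : {poly K} := 'X^D.
set q' := vadd q (vsc g u).
have hq'sz : (tsz q' <= n - m)%N.
  apply: tsz_coefP => j hj; rewrite vcoef_add vcoef_scXn.
  have -> : (j < D)%N = false by apply/negbTE; rewrite -leqNgt; lia.
  move: hj; rewrite leq_eqVlt => /orP [/eqP <-|hj].
    have -> : (n - m - D = m.+1)%N by lia.
    by rewrite hu_coef vadd_oppr.
  rewrite !vcoef_big ?vadd_v0r //; first by apply: leq_trans hu_sz _; lia.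
  by rewrite hqsz.
set W := cross u q'.
have hWsz : (tsz W <= n.+1)%N by have := tsz_cross u q'; rewrite -/W; lia.
have hTW : cross T W = vsc (- dot T u) q by rewrite /T -hpq /W /q' cross_T_W.
have [fq hfq] := nz_dot qn0.
set Dp := dot fq (cross T W).
have hDp : Dp != 0 by rewrite /Dp hTW dot_scr mulf_neq0 // oppr_eq0.
have [rs hrs] := roots_list hDp.
set k := (size c).-1.
pose L3 := fun (x y : v3 K) => [:: - vx x / vx y; - vy x / vy y; - vz x / vz y].
exists W, ([:: 0; - c`_k / (vz W)`_k] ++ L3 (vcoef T n) (vcoef W n) ++
   flatten [seq L3 (vev T r) (vev W r) | r <- rs]).
move=> s; rewrite !mem_cat !negb_or => /and3P [].
move=> /and3P [s0 sc _] /and4P [sn1 sn2 sn3 _] sr.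
have sn : s \notin L3 (vcoef T n) (vcoef W n) by rewrite /L3 !inE !negb_or sn1 sn2 sn3.
set Ts := vadd T (vsc s%:P W).
change (inPmu n m.+1 (vx Ts) (vy Ts) (vz Ts)).
have hkk : s%:P * (s^-1)%:P = 1 by rewrite -polyCM mulfV.
set Ps := vadd p (vsc s%:P u).
set Qs := vadd (vsc ((s^-1)%:P * g) p) q'.
have hPQ : cross Ps Qs = Ts by rewrite /Ps /Qs /q' deform_full // hpq.
have hTsz : tsz Ts = n.+1.
  have le : (tsz Ts <= n.+1)%N.
    apply: tsz_add; first by rewrite hT.
    apply: leq_trans (tsz_vsc_le _ _) _; exact: pred_add_le (size_polyC_leq1 s) hWsz.
  have nz : vcoef Ts n <> v0 K.
    by rewrite /Ts vcoef_add vcoef_scC; apply: lin_nz => //; exact: vcoef_top hT.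
  apply/eqP; rewrite eqn_leq le /= ltnNge; apply/negP => h; apply: nz; exact: vcoef_big.
have hcs : vz Ts != 0.
  apply/eqP => h; have : (vz Ts)`_k = 0 by rewrite h coef0.
  rewrite /Ts /= coefD coefCM; apply/eqP; apply: scal_nz => //.
  by rewrite /k -lead_coefE lead_coef_eq0.
have hcop' : coprimep (gcdp (vx Ts) (vy Ts)) (vz Ts).
  apply: nocommon_coprime => r r1 r2 r3.
  have hev : vadd (vev T r) (vsc s (vev W r)) = v0 K.
    have : vev Ts r = v0 K by rewrite /vev (rootP r1) (rootP r2) (rootP r3).
    by rewrite /Ts vev_add vev_sc hornerC.
  have Trn0 : vev T r <> v0 K.
    move=> h; have := congr1 (fun P => P.[r]) heT.
    by rewrite /= vev_dot -/T h dot_v0r hornerC => /eqP; rewrite eq_sym oner_eq0.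
  have rin : r \in rs.
    apply: hrs; apply/rootP; rewrite /Dp vev_dot vev_cross (lin_solve hev).
    by rewrite cross_scl cross_self vsc_v0 dot_v0r.
  apply: (lin_nz Trn0 _ hev); apply/negP => hin; apply: (negP sr).
  by apply/flatten_mapP; exists r.
split; first by split; [|split].
have hPsc : vcoef Ps m.+1 = vsc s (vsc (-1) lq).
  rewrite /Ps vcoef_add vcoef_scC hu_coef vcoef_big ?vadd_v0l //.
  by rewrite hpsz.
have hPnz : vcoef Ps m.+1 <> v0 K.
  rewrite hPsc => h; apply: hlq.
  have := vsc_eq0 s0 h; apply: vsc_eq0; by rewrite oppr_eq0 oner_eq0.
have hPsz : tsz Ps = m.+2.
  have le : (tsz Ps <= m.+2)%N.
    apply: tsz_add; first by rewrite hpsz.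
    apply: leq_trans (tsz_vsc_le _ _) _; exact: pred_add_le (size_polyC_leq1 s) hu_sz.
  apply/eqP; rewrite eqn_leq le /= ltnNge; apply/negP => h; apply: hPnz; exact: vcoef_big.
have hPn0 : Ps <> v0 _ by move=> h; move: hPsz; rewrite h tsz_v0.
have hQsz : (tsz Qs <= n - m)%N.
  apply: tsz_add => //; apply: leq_trans (tsz_vsc_le _ _) _.
  have := size_mul_le (size_polyC_leq1 (s^-1)) (eq_leq (size_polyXn K D)).
  rewrite -/g hpsz; exact: ar1.
apply: (class_of (p := Ps)) => //.
  by rewrite -v3E -hPQ dot_cross_l.
move=> R0 hR0s hR0n; rewrite leqNgt; apply/negP => hlt.
have [es hes] := bezout3 hcop'; rewrite -v3E in hes hR0s.
apply: (syz_lower (P := Ps) (Q := Qs) (e := es) (R0 := R0)) => //.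
- by rewrite hPQ dot_sym.
- by rewrite hPQ.
- by rewrite hPQ hTsz; exact: (ar2 hn hlt hQsz).
- by rewrite hPQ hTsz hPsz; exact: (ar3 hn hlt).
Qed.
End Deform.
Section Clos.
Variable K : closedFieldType.
Local Notation PV := (v3 {poly K}).

Lemma poly_in_s N (p : {mpoly K[N]}) (x y : 'I_N -> K) :
  exists Q : {poly K}, forall s, Q.[s] = p.@[fun i => x i + s * y i].
Proof.
exists (\sum_(m <- msupp p) (p@_m)%:P * \prod_(i < N) ((x i)%:P + 'X * (y i)%:P) ^+ m i).
move=> s; rewrite mevalE horner_sum; apply: eq_bigr => m _.
rewrite hornerM hornerC horner_prod; congr (_ * _); apply: eq_bigr => i _.
by rewrite horner_exp hornerD hornerC hornerM hornerX hornerC mulrC.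
Qed.

Lemma inf_avoid (L : seq K) : exists x, x \notin L.
Proof.
set P0 := \prod_(l <- L) ('X - l%:P).
have m0 : P0 \is monic by apply: monic_prod_XsubC.
have m1 : P0 * 'X \is monic by rewrite monicMr ?monicX.
have s1 : size (P0 * 'X) = (size L).+2.
  by rewrite size_Mmonic ?monic_neq0 ?monicX // size_polyX /P0 size_prod_XsubC addn2.
have s2 : size (P0 * 'X + 1) = (size L).+2 by rewrite size_addl s1 // size_poly1.
have /closed_rootP [r hr] : size (P0 * 'X + 1) != 1%N by rewrite s2.
exists r; apply/negP => hrL; move: hr.
have : root P0 r by rewrite /P0 root_prod_XsubC.
by move=> /rootP h; rewrite /root !hornerE h mul0r add0r oner_eq0.
Qed.

Lemma uniq_list n : exists s : seq K, uniq s /\ size s = n.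
Proof.
elim: n => [|n [s [us hs]]]; first by exists [::].
have [x hx] := inf_avoid s; exists (x :: s); by rewrite /= hx us hs.
Qed.

Lemma poly_zero_off (Q : {poly K}) (L : seq K) : (forall s, s \notin L -> Q.[s] = 0) -> Q = 0.
Proof.
move=> h; apply/eqP/negP => /negP Qn0.
set R := Q * \prod_(l <- L) ('X - l%:P).
have mP : \prod_(l <- L) ('X - l%:P) \is monic by apply: monic_prod_XsubC.
have Rn0 : R != 0 by rewrite mulf_neq0 // monic_neq0.
have [S [uS hS]] := uniq_list (size R).
have hall : all (root R) S.
  apply/allP => z _; rewrite /R rootM; case: (boolP (z \in L)) => hz.
    by rewrite root_prod_XsubC hz orbT.
  by apply/orP; left; apply/rootP; apply: h.
by have := max_poly_roots Rn0 hall uS; rewrite hS ltnn.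
Qed.

Lemma coordsD n (a b c a' b' c' : {poly K}) s i :
  coords n (a + s%:P * a') (b + s%:P * b') (c + s%:P * c') i =
  coords n a b c i + s * coords n a' b' c' i.
Proof. by rewrite /coords; case: ifP => _; [|case: ifP => _]; rewrite coefD coefCM. Qed.

Lemma closure_step n mu (a b c : {poly K}) (W : PV) (L : seq K) :
  (forall s, s \notin L -> inPmu n mu (a + s%:P * vx W) (b + s%:P * vy W) (c + s%:P * vz W)) ->
  zclosure (Pmu_pts n mu) (coords n a b c).
Proof.
move=> hL Z [F hF] hZ; apply/hF => p Fp.
have [Q hQ] := poly_in_s p (coords n a b c) (coords n (vx W) (vy W) (vz W)).
have Q0 : Q = 0.
  apply: (poly_zero_off (L := L)) => s hs; rewrite hQ.
  have hz : Z (coords n (a + s%:P * vx W) (b + s%:P * vy W) (c + s%:P * vz W)).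
    apply: hZ; exists (a + s%:P * vx W), (b + s%:P * vy W), (c + s%:P * vz W).
    by split => //; exact: hL.
  move/hF: hz => /(_ p Fp) <-; apply: meval_eq => i; by rewrite coordsD.
have := hQ 0; rewrite Q0 horner0 => ->; apply: meval_eq => i; by rewrite mul0r addr0.
Qed.

Lemma closure_mono N (S T : ('I_N -> K) -> Prop) :
  (forall y, S y -> zclosure T y) -> forall x, zclosure S x -> zclosure T x.
Proof.
move=> hST x hx Z hZc hTZ; apply: hx => // y hy; exact: hST y hy Z hZc hTZ.
Qed.

Lemma backward n m mu (a b c : {poly K}) : (mu <= n./2)%N -> (m <= mu)%N -> inPmu n m a b c ->
  zclosure (Pmu_pts n mu) (coords n a b c).
Proof.
move=> hmu hm hin.
suff : forall k, (m <= k)%N -> (k <= mu)%N -> zclosure (Pmu_pts n k) (coords n a b c).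
  by move/(_ mu hm (leqnn _)).
elim => [|k IH] hk1 hk2.
  move: hk1; rewrite leqn0 => /eqP hm0; move: hin; rewrite hm0 => hin.
  by move=> Z _ hZ; apply: hZ; exists a, b, c.
move: hk1; rewrite leq_eqVlt => /orP [/eqP hmk|hmk].
  by move=> Z _ hZ; apply: hZ; exists a, b, c; rewrite -hmk.
have := IH hmk (ltnW hk2); apply: closure_mono => y [a' [b' [c' [hin' ->]]]].
have hn : (2 * k + 2 <= n)%N by move: hk2 hmu; lia.
have [W [L hL]] := deform hn hin'.
exact: closure_step hL.
Qed.
End Clos.
Lemma sum_extend (R : nmodType) (m M : nat) (G : nat -> R) : (m <= M)%N ->
  (forall i, (m <= i)%N -> (i < M)%N -> G i = 0) -> \sum_(i < m) G i = \sum_(i < M) G i.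
Proof.
move=> hmM hG; rewrite (big_ord_widen _ _ hmM) big_mkcond /=.
apply: eq_bigr => i _; case: ifP => // /negbT; rewrite -leqNgt => h.
by rewrite hG.
Qed.

Lemma idx_gt0 n : (0 < 3 * n.+1)%N. Proof. by rewrite muln_gt0. Qed.
Definition idx n t : 'I_(3 * n.+1) := insubd (Ordinal (idx_gt0 n)) t.
Lemma idx_val n t : (t < 3 * n.+1)%N -> nat_of_ord (idx n t) = t.
Proof. by move=> h; rewrite /idx val_insubd h. Qed.

Section Forward.
Variable K : closedFieldType.
Local Notation PV := (v3 {poly K}).
Variables (n mu : nat).

Definition Mb (R : nmodType) (ent : nat -> R) (o : nat) : 'M[R]_(mu.+1, n + mu.+1) :=
  \matrix_(j, k) (if ((j <= k) && (k - j <= n))%N then ent (o * n.+1 + (k - j))%N else 0).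
Definition Mg (R : nmodType) (ent : nat -> R) :=
  col_mx (col_mx (Mb ent 0) (Mb ent 1)) (Mb ent 2).
Definition Mx (x : 'I_(3 * n.+1) -> K) := Mg (fun t => x (idx n t)).
Definition Mp := Mg (fun t => ('X_(idx n t) : {mpoly K[3 * n.+1]})).
Local Notation rr := (mu.+1 + mu.+1 + mu.+1)%N.
Local Notation cc := (n + mu.+1)%N.

Definition Zs (x : 'I_(3 * n.+1) -> K) : Prop := forall f : 'I_rr -> 'I_cc, \det (colsub f (Mx x)) = 0.

Lemma map_Mp x : map_mx (meval x) Mp = Mx x.
Proof.
rewrite /Mp /Mg /Mx !map_col_mx; congr col_mx; [congr col_mx|];
  apply/matrixP => j k; rewrite !mxE; case: ifP => _; by rewrite ?mevalXU ?meval0.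
Qed.

Lemma Zs_closed : zclosed Zs.
Proof.
exists (fun p => exists f : 'I_rr -> 'I_cc, p = \det (colsub f Mp)) => x; split.
  move=> hZ p [f ->]; rewrite -[meval x]/(GRing.RMorphism.sort _).
  by rewrite -det_map_mx map_mxsub map_Mp hZ.
move=> h f; have := h _ (ex_intro _ f erefl).
by rewrite -det_map_mx map_mxsub map_Mp.
Qed.

Lemma row_Mb (ent : nat -> K) (o : nat) (A a : {poly K}) :
  (size A <= mu.+1)%N -> (size a <= n.+1)%N ->
  (forall t, (t <= n)%N -> ent (o * n.+1 + t)%N = a`_t) ->
  forall k : 'I_cc, ((\row_(j < mu.+1) A`_j) *m Mb ent o) 0 k = (A * a)`_k.
Proof.
move=> hA ha hent k; rewrite !mxE coefM.
pose G := fun i : nat => A`_i * (if (i <= k)%N then a`_(k - i) else 0).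
transitivity (\sum_(i < mu.+1) G i).
  apply: eq_bigr => j _; rewrite !mxE /G; case: (leqP j k) => hjk /=; last by [].
  case: (leqP (k - j) n) => hkn; first by rewrite hent.
  by rewrite [a`__]nth_default ?mulr0 //; apply: leq_trans ha hkn.
rewrite (sum_extend (M := (mu.+1 + k.+1)%N)) ?leq_addr //; last first.
  by move=> i hi _; rewrite /G nth_default ?mul0r //; apply: leq_trans hA hi.
have -> : \sum_(j < k.+1) A`_j * a`_(k - j) = \sum_(j < k.+1) G j.
  by apply: eq_bigr => j _; rewrite /G -ltnS ltn_ord.
rewrite [RHS](sum_extend (M := (mu.+1 + k.+1)%N)) ?leq_addl //.
by move=> i hi _; rewrite /G leqNgt hi mulr0.
Qed.

Lemma row_Mg (a b c A B C : {poly K}) :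
  (size a <= n.+1)%N -> (size b <= n.+1)%N -> (size c <= n.+1)%N ->
  (size A <= mu.+1)%N -> (size B <= mu.+1)%N -> (size C <= mu.+1)%N ->
  forall k : 'I_cc,
  (row_mx (row_mx (\row_(j < mu.+1) A`_j) (\row_(j < mu.+1) B`_j)) (\row_(j < mu.+1) C`_j)
     *m Mx (coords n a b c)) 0 k = (A * a + B * b + C * c)`_k.
Proof.
move=> ha hb hc hA hB hC k.
rewrite /Mx /Mg !mul_row_col [LHS]mxE [X in X + _ = _]mxE !coefD.
set ent := fun t : nat => coords n a b c (idx n t).
have h0 : forall t, (t <= n)%N -> ent (0 * n.+1 + t)%N = a`_t.
  move=> t ht; rewrite /ent /coords idx_val; last by lia.
  by rewrite mul0n add0n ifT //; lia.
have h1 : forall t, (t <= n)%N -> ent (1 * n.+1 + t)%N = b`_t.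
  move=> t ht; rewrite /ent /coords idx_val; last by lia.
  rewrite ifF; last by lia.
  by rewrite ifT; [congr nth; lia | lia].
have h2 : forall t, (t <= n)%N -> ent (2 * n.+1 + t)%N = c`_t.
  move=> t ht; rewrite /ent /coords idx_val; last by lia.
  rewrite ifF; last by lia.
  by rewrite ifF; [congr nth; lia | lia].
by rewrite (row_Mb hA ha h0) (row_Mb hB hb h1) (row_Mb hC hc h2).
Qed.

Lemma row_poly_eq0 (A : {poly K}) : (size A <= mu.+1)%N ->
  \row_(j < mu.+1) A`_j = 0 -> A = 0.
Proof.
move=> hA h; apply/polyP => j; rewrite coef0.
case: (ltnP j mu.+1) => hj; last by rewrite nth_default //; apply: leq_trans hA hj.
by have := congr1 (fun M : 'rV_(mu.+1) => M 0 (Ordinal hj)) h; rewrite !mxE.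
Qed.

Lemma sizes_of (a b c : {poly K}) : maxn (size a) (maxn (size b) (size c)) = n.+1 ->
  [/\ (size a <= n.+1)%N, (size b <= n.+1)%N & (size c <= n.+1)%N].
Proof. by move=> h; apply/(tsz_leP (V3 a b c)); rewrite /tsz /= h. Qed.

Lemma Pmu_in_Zs y : Pmu_pts n mu y -> Zs y.
Proof.
move=> [a [b [c [[[_ [_ hsz]] [[A [B [C [hs [hn hd]]]]] _]] ->]]]].
have [ha hb hc] := sizes_of hsz.
have : (tsz (V3 A B C) <= mu.+1)%N by move: hd; rewrite tdeg_tsz; lia.
move/tsz_leP => /= [hA hB hC].
set u := row_mx (row_mx (\row_(j < mu.+1) A`_j) (\row_(j < mu.+1) B`_j)) (\row_(j < mu.+1) C`_j).
have hu : u *m Mx (coords n a b c) = 0.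
  apply/matrixP => i k; rewrite ord1 row_Mg // mxE.
  by move: hs; rewrite /is_syz => ->; rewrite coef0.
have un0 : u != 0.
  apply/negP; rewrite !row_mx_eq0 => /andP [/andP [/eqP h1 /eqP h2] /eqP h3].
  move: hn; rewrite (row_poly_eq0 hA h1) (row_poly_eq0 hB h2) (row_poly_eq0 hC h3).
  by rewrite eqxx.
move=> f; apply/eqP/negP => /negP hdet.
have hunit : colsub f (Mx (coords n a b c)) \in unitmx by rewrite unitmxE unitfE.
have : u *m colsub f (Mx (coords n a b c)) = 0.
  rewrite mulmx_colsub hu; apply/matrixP => i j; by rewrite !mxE.
move=> h0; move/negP: un0; apply.
by rewrite -(mulmxK hunit u) h0 mul0mx.
Qed.

Lemma Zs_syz (a b c : {poly K}) :
  (size a <= n.+1)%N -> (size b <= n.+1)%N -> (size c <= n.+1)%N ->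
  Zs (coords n a b c) ->
  exists R0 : PV, [/\ dot R0 (V3 a b c) = 0, R0 <> v0 _ & (tsz R0 <= mu.+1)%N].
Proof.
move=> ha hb hc hZ.
apply: NNPP => H.
set M := Mx (coords n a b c).
have hfree : row_free M.
  apply: inj_row_free => v hv.
  set vA := lsubmx (lsubmx v); set vB := rsubmx (lsubmx v); set vC := rsubmx v.
  set A := \poly_(j < mu.+1) vA 0 (inord j); set B := \poly_(j < mu.+1) vB 0 (inord j).
  set C := \poly_(j < mu.+1) vC 0 (inord j).
  have eA : \row_(j < mu.+1) A`_j = vA by apply/rowP => j; rewrite mxE coef_poly ltn_ord inord_val.
  have eB : \row_(j < mu.+1) B`_j = vB by apply/rowP => j; rewrite mxE coef_poly ltn_ord inord_val.
  have eC : \row_(j < mu.+1) C`_j = vC by apply/rowP => j; rewrite mxE coef_poly ltn_ord inord_val.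
  have ev : v = row_mx (row_mx (\row_(j < mu.+1) A`_j) (\row_(j < mu.+1) B`_j)) (\row_(j < mu.+1) C`_j).
    by rewrite eA eB eC /vA /vB /vC !hsubmxK.
  have hA : (size A <= mu.+1)%N by apply: size_poly.
  have hB : (size B <= mu.+1)%N by apply: size_poly.
  have hC : (size C <= mu.+1)%N by apply: size_poly.
  have hsyz : A * a + B * b + C * c = 0.
    apply/polyP => k; rewrite coef0.
    case: (ltnP k (n + mu.+1)) => hk.
      have := congr1 (fun N : 'rV_(n + mu.+1) => N 0 (Ordinal hk)) hv.
      by rewrite /M ev row_Mg // mxE.
    rewrite nth_default //; apply: leq_trans _ hk.
    have s1 := size_mul_le hA ha; have s2 := size_mul_le hB hb; have s3 := size_mul_le hC hc.
    apply: size_add_le; [apply: size_add_le|]; (apply: leq_trans; [eassumption|]); lia.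
  have hR : V3 A B C = v0 _.
    apply: NNPP => hne; apply: H; exists (V3 A B C); split => //.
    by apply/tsz_leP.
  case: hR => hA0 hB0 hC0.
  have z : \row_(j < mu.+1) (0 : {poly K})`_j = 0 by apply/rowP => j; rewrite !mxE coef0.
  by rewrite ev hA0 hB0 hC0 z !row_mx0.
have hfull : row_full M^T by rewrite /row_full mxrank_tr.
set f := fullrankfun hfull.
have hunit := fullrowsub_unit hfull.
have := hZ (fun i => f i); rewrite -/M => hdet.
move: hunit; rewrite unitmxE unitfE -[rowsub _ _]/(mxsub f id M^T) -trmx_mxsub det_tr.
by rewrite -[mxsub id _ M]/(colsub (fun i => f i) M) hdet eqxx.
Qed.

End Forward.
Lemma forward (K : closedFieldType) n mu (a b c : {poly K}) : inP n a b c ->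
  zclosure (Pmu_pts n mu) (coords n a b c) -> exists m, (m <= mu)%N /\ inPmu n m a b c.
Proof.
move=> hin hcl.
have hZ : @Zs K n mu (coords n a b c).
  by apply: hcl; [exact: Zs_closed | exact: Pmu_in_Zs].
case: (hin) => [_ [_ hsz]]; have [ha hb hc] := sizes_of hsz.
have [R0 [h1 h2 h3]] := Zs_syz ha hb hc hZ.
have pos : forall R1 : v3 {poly K}, R1 <> v0 _ -> (tsz R1).-1.+1 = tsz R1.
  by move=> R1 hR; apply: prednK; rewrite lt0n; apply/eqP => /tsz_eq0.
have [m [[R1 [g1 g2 g3]] hmin]] := ex_min (ex_intro
  (fun k => exists R1 : v3 {poly K}, [/\ dot R1 (V3 a b c) = 0, R1 <> v0 _ & tsz R1 = k.+1])
  (tsz R0).-1 (ex_intro _ R0 (And3 h1 h2 (esym (pos _ h2))))).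
exists m; split.
  have := hmin (tsz R0).-1 (ex_intro _ R0 (And3 h1 h2 (esym (pos _ h2)))).
  by move: h3; rewrite -(pos _ h2); lia.
split => //; apply: (class_of (p := R1)) => // R2 hs hn.
have := hmin (tsz R2).-1 (ex_intro _ R2 (And3 hs hn (esym (pos _ hn)))).
by rewrite -(pos _ hn); lia.
Qed.

Unset Implicit Arguments.

Theorem mainTheorem2 (K : closedFieldType) (n mu : nat) :
  (1 <= n)%N -> (mu <= n./2)%N ->
  forall a b c : {poly K}, inP n a b c ->
    (zclosure (Pmu_pts n mu) (coords n a b c) <->
     exists m : nat, (m <= mu)%N /\ inPmu n m a b c).
Proof.
move=> _ hmu a b c hin; split; first exact: forward.
by move=> [m [hm hpm]]; exact: backward hmu hm hpm.
Qed.
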